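(* In the setting described in the context, let $c_0,c_1$ be real constants and let $D$ be the torsionless connection $$D\Xi^a=c_0X^a\varrho\otimes\varrho+c_1\big((-1)^{\hat a}\Xi^a\otimes\varrho-\varrho\otimes\Xi^a\big),\qquad a=1,2,3,$$ extended to $\Omega^1\otimes_{\mathcal A}\Omega^1$ by $D(\Xi^a\otimes\Xi^b)=D\Xi^a\otimes\Xi^b+(-1)^{\hat a}\sigma_{12}(\Xi^a\otimes D\Xi^b)$, $\sigma_{12}=\sigma\otimes1$. Let $g:\Omega^1\otimes_{\mathcal A}\Omega^1\to\mathcal A$ be the $\mathcal A$-bilinear ($OSp_h(2/1)$-invariant) metric with $g(\Xi^a\otimes\Xi^b)=g^{ab}$, where $$(g^{ab})=\begin{pmatrix}-\frac h2&0&-1\\0&1&0\\1&0&0\end{pmatrix}.$$ Then $D$ is compatible with $g$, i.e. $d\circ g=(1\otimes g)\circ D$ on $\Omega^1\otimes_{\mathcal A}\Omega^1$, only for the trivial choice $c_0=c_1=0$; for any other choice of $(c_0,c_1)$ the covariant derivative $D$ is not metric.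
   Context: Fix a real (commuting) parameter $h$. $\mathcal A$ is the $\mathbb Z_2$-graded algebra generated by odd $\theta_1,\theta_2$ and even $x$ with relations $[\theta_1,x]=-hx\theta_2$, $\{\theta_1,\theta_2\}=0$, $[\theta_2,x]=0$, $\theta_1^2=-\frac h2(x^2-2\theta_1\theta_2)$, $\theta_2^2=0$. Write $(X^1,X^2,X^3)=(\theta_1,x,\theta_2)$, index parities $\hat1=\hat3=0$, $\hat2=1$, and $\Xi^a=dX^a$, i.e. $\xi_1=d\theta_1$, $\eta=dx$, $\xi_2=d\theta_2$; $\xi_1,\xi_2$ are even and $\eta$ odd. The exterior derivative $d$ is nilpotent and satisfies the graded Leibniz rule. The differential calculus has the relations $\xi_1\wedge\eta-\eta\wedge\xi_1=h\eta\wedge\xi_2$, $\xi_1\wedge\xi_2-\xi_2\wedge\xi_1=h\xi_2\wedge\xi_2$, $\eta\wedge\xi_2=\xi_2\wedge\eta$, $\eta\wedge\eta=-\frac h2\xi_2\wedge\xi_2$; and $[\theta_1,\xi_1]=h(\theta_1\xi_2+x\eta-\theta_2\xi_1-\frac h2\theta_2\xi_2)$, $\{\theta_1,\eta\}=hx\xi_2$, $[\theta_1,\xi_2]=h\theta_2\xi_2$, $[x,\xi_1]=-h\theta_2\eta$, $[x,\eta]=-h\theta_2\xi_2$, $[x,\xi_2]=0$, $[\theta_2,\xi_1]=-h\theta_2\xi_2$, $\{\theta_2,\eta\}=0$, $[\theta_2,\xi_2]=0$. Set $\varrho=\theta_1\xi_2+x\eta-\theta_2\xi_1-\frac h2\theta_2\xi_2$.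 The map $\sigma$ on $\Omega^1\otimes_{\mathcal A}\Omega^1$ is the $\mathcal A$-bilinear map given by $\sigma(\xi_1\otimes\xi_1)=\xi_1\otimes\xi_1-h(\xi_1\otimes\xi_2+\eta\otimes\eta-\xi_2\otimes\xi_1-\frac h2\xi_2\otimes\xi_2)$, $\sigma(\xi_1\otimes\eta)=\eta\otimes\xi_1+h\xi_2\otimes\eta$, $\sigma(\xi_1\otimes\xi_2)=\xi_2\otimes\xi_1+h\xi_2\otimes\xi_2$, $\sigma(\eta\otimes\xi_1)=\xi_1\otimes\eta-h\eta\otimes\xi_2$, $\sigma(\eta\otimes\eta)=-\eta\otimes\eta-h\xi_2\otimes\xi_2$, $\sigma(\eta\otimes\xi_2)=\xi_2\otimes\eta$, $\sigma(\xi_2\otimes\xi_1)=\xi_1\otimes\xi_2-h\xi_2\otimes\xi_2$, $\sigma(\xi_2\otimes\eta)=\eta\otimes\xi_2$, $\sigma(\xi_2\otimes\xi_2)=\xi_2\otimes\xi_2$. The covariant derivative satisfies $D(f\xi)=df\otimes\xi+(-1)^{\hat f}fD\xi$ and $D(\xi f)=(-1)^{\hat\xi}\sigma(\xi\otimes df)+(D\xi)f$ for homogeneous $f\in\mathcal A$, $\xi\in\Omega^1$. The map $1\otimes g:\Omega^1\otimes_{\mathcal A}\Omega^1\otimes_{\mathcal A}\Omega^1\to\Omega^1$ applies $g$ to the last two tensor factors. *)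

(* Defs.v *)
From mathcomp Require Import all_boot all_order all_algebra.
From mathcomp Require Import reals.

Set Implicit Arguments.
Unset Strict Implicit.
Unset Printing Implicit Defensive.

Import Order.TTheory GRing.Theory Num.Theory.
Local Open Scope ring_scope.

(* index set {1,2,3} for X^a = (theta1, x, theta2) and Xi^a = (xi1, eta, xi2) *)
Inductive ix := i1 | i2 | i3.

Definition ix_eqb (a b : ix) : bool :=
  match a, b with
  | i1, i1 | i2, i2 | i3, i3 => true
  | _, _ => false
  end.

Section Superplane.
Variable R : realType.
Variable h : R.

(* The algebra A.  Every element is uniquely
     p0(x) + p1(x) th1 + p2(x) th2 + p12(x) th1 th2
   (powers of x written on the left).                                  *)
Record A := mkA { A0 : {poly R}; A1 : {poly R}; A2 : {poly R}; A12 : {poly R} }.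

Definition zeroA : A := mkA 0 0 0 0.
Definition polyA (p : {poly R}) : A := mkA p 0 0 0.
Definition cstA (c : R) : A := polyA c%:P.
Definition oneA : A := cstA 1.
Definition th1 : A := mkA 0 1 0 0.
Definition th2 : A := mkA 0 0 1 0.
Definition xA  : A := polyA 'X.

Definition addA (a b : A) : A :=
  mkA (A0 a + A0 b) (A1 a + A1 b) (A2 a + A2 b) (A12 a + A12 b).
Definition scaleA (c : R) (a : A) : A :=
  mkA (c *: A0 a) (c *: A1 a) (c *: A2 a) (c *: A12 a).
Definition oppA (a : A) : A := scaleA (-1) a.
Definition pmulA (p : {poly R}) (a : A) : A :=
  mkA (p * A0 a) (p * A1 a) (p * A2 a) (p * A12 a).
(* left multiplication by th2 and by th1, computed from the relations
   th2 x = x th2, th2^2 = 0, th2 th1 = - th1 th2,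
   th1 x = x th1 - h x th2, th1^2 = -h/2 x^2 + h th1 th2 *)
Definition lth2 (b : A) : A := mkA 0 0 (A0 b) (- A1 b).
Definition lth1 (b : A) : A :=
  mkA (- (h / 2) *: ('X^2 * A1 b))
      (A0 b)
      (- h *: ('X * (A0 b)^`()) - (h / 2) *: ('X^2 * A12 b))
      (h *: A1 b + h *: ('X * (A1 b)^`()) + A2 b).
Definition mulA (a b : A) : A :=
  addA (addA (pmulA (A0 a) b) (pmulA (A1 a) (lth1 b)))
       (addA (pmulA (A2 a) (lth2 b)) (pmulA (A12 a) (lth1 (lth2 b)))).

Definition evenA (a : A) : A := mkA (A0 a) 0 0 (A12 a).
Definition oddA (a : A) : A := mkA 0 (A1 a) (A2 a) 0.
(* f |-> (-1)^(hat f) f, extended additively *)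
Definition signA (a : A) : A := addA (evenA a) (oppA (oddA a)).

Definition sum3 (f : ix -> A) : A := addA (addA (f i1) (f i2)) (f i3).

Definition Xgen (a : ix) : A := match a with i1 => th1 | i2 => xA | i3 => th2 end.
Definition sgn (a : ix) : R := match a with i2 => -1 | _ => 1 end.

(* Omega^1 : free left A-module on Xi^1 = xi1, Xi^2 = eta, Xi^3 = xi2;
   omega = sum_a omega(a) Xi^a.                                        *)
Definition O1 := ix -> A.
(* Omega^1 (x)_A Omega^1 : t = sum_{a,b} t a b Xi^a (x) Xi^b *)
Definition T2 := ix -> ix -> A.
Definition T3 := ix -> ix -> ix -> A.

Definition Xi (a : ix) : O1 := fun c => if ix_eqb c a then oneA else zeroA.
Definition addO (w v : O1) : O1 := fun c => addA (w c) (v c).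
Definition lmulO (a : A) (w : O1) : O1 := fun c => mulA a (w c).
Definition mkO (u v w : A) : O1 := fun c => match c with i1 => u | i2 => v | i3 => w end.

(* sum_c w(c) F(c), where F(c) is the normal form of Xi^c * (something) *)
Definition linO (w : O1) (F : ix -> O1) : O1 :=
  fun d => sum3 (fun c => mulA (w c) (F c d)).

Definition rho : O1 := mkO (oppA th2) xA (addA th1 (scaleA (- (h / 2)) th2)).

(* Xi^c * p(x) :  xi1 p = p xi1 + h p' th2 eta,  eta p = p eta + h p' th2 xi2,
   xi2 p = p xi2   (from [x,xi1] = -h th2 eta, [x,eta] = -h th2 xi2, [x,xi2]=0) *)
Definition XiP (p : {poly R}) (c : ix) : O1 :=
  match c with
  | i1 => mkO (polyA p) (mkA 0 0 (h *: p^`()) 0) zeroA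
  | i2 => mkO zeroA (polyA p) (mkA 0 0 (h *: p^`()) 0)
  | i3 => mkO zeroA zeroA (polyA p)
  end.
(* Xi^c * th1, from [th1,xi1] = h rho, {th1,eta} = h x xi2, [th1,xi2] = h th2 xi2 *)
Definition XiT1 (c : ix) : O1 :=
  match c with
  | i1 => addO (lmulO th1 (Xi i1)) (fun d => scaleA (- h) (rho d))
  | i2 => mkO zeroA (oppA th1) (scaleA h xA)
  | i3 => mkO zeroA zeroA (addA th1 (scaleA (- h) th2))
  end.
(* Xi^c * th2, from [th2,xi1] = -h th2 xi2, {th2,eta} = 0, [th2,xi2] = 0 *)
Definition XiT2 (c : ix) : O1 :=
  match c with
  | i1 => mkO th2 zeroA (scaleA h th2)
  | i2 => mkO zeroA (oppA th2) zeroA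
  | i3 => mkO zeroA zeroA th2
  end.

Definition rP (w : O1) (p : {poly R}) : O1 := linO w (XiP p).
Definition rT1 (w : O1) : O1 := linO w XiT1.
Definition rT2 (w : O1) : O1 := linO w XiT2.
Definition rA (w : O1) (b : A) : O1 :=
  addO (addO (rP w (A0 b)) (rT1 (rP w (A1 b))))
       (addO (rT2 (rP w (A2 b))) (rT2 (rT1 (rP w (A12 b))))).

(* exterior derivative d : A -> Omega^1, determined by d x = eta,
   d th1 = xi1, d th2 = xi2 and the graded Leibniz rule:
   d p(x) = p'(x) eta + h/2 p''(x) th2 xi2,
   d (th1 th2) = xi1 th2 - th1 xi2 = th2 xi1 + h th2 xi2 - th1 xi2 *)
Definition dP (p : {poly R}) : O1 :=
  mkO zeroA (polyA p^`()) (mkA 0 0 ((h / 2) *: p^`(2)) 0).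
Definition dth12 : O1 := mkO th2 zeroA (addA (scaleA h th2) (oppA th1)).
Definition dA (b : A) : O1 :=
  addO (addO (dP (A0 b))
             (addO (rT1 (dP (A1 b))) (lmulO (polyA (A1 b)) (Xi i1))))
       (addO (addO (rT2 (dP (A2 b))) (lmulO (polyA (A2 b)) (Xi i3)))
             (addO (rT2 (rT1 (dP (A12 b)))) (lmulO (polyA (A12 b)) dth12))).

Definition addT2 (s t : T2) : T2 := fun a b => addA (s a b) (t a b).
Definition addT3 (s t : T3) : T3 := fun a b c => addA (s a b c) (t a b c).
Definition scaleT2 (c : R) (t : T2) : T2 := fun a b => scaleA c (t a b).
Definition scaleT3 (c : R) (t : T3) : T3 := fun a b e => scaleA c (t a b e).
Definition lmulT2 (f : A) (t : T2) : T2 := fun a b => mulA f (t a b).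
Definition lmulT3 (f : A) (t : T3) : T3 := fun a b c => mulA f (t a b c).
Definition sumT3 (F : ix -> ix -> T3) : T3 :=
  fun i j k => sum3 (fun a => sum3 (fun b => F a b i j k)).

Definition tens11 (w v : O1) : T2 := fun a b => rA w (v b) a.
Definition tens12 (w : O1) (t : T2) : T3 := fun a b c => rA w (t b c) a.
Definition tens2Xi (t : T2) (e : ix) : T3 :=
  fun a b c => if ix_eqb c e then t a b else zeroA.
Definition tens1XiXi (w : O1) (e f : ix) : T3 :=
  fun a b c => if ix_eqb b e && ix_eqb c f then w a else zeroA.

(* the braiding sigma: sigma(Xi^a (x) Xi^b) = sum_{c,d} sigc a b c d Xi^c (x) Xi^d *)
Definition sigc (a b c d : ix) : R :=
  match a, b, c, d with
  | i1, i1, i1, i1 => 1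
  | i1, i1, i1, i3 => - h
  | i1, i1, i2, i2 => - h
  | i1, i1, i3, i1 => h
  | i1, i1, i3, i3 => h ^+ 2 / 2
  | i1, i2, i2, i1 => 1
  | i1, i2, i3, i2 => h
  | i1, i3, i3, i1 => 1
  | i1, i3, i3, i3 => h
  | i2, i1, i1, i2 => 1
  | i2, i1, i2, i3 => - h
  | i2, i2, i2, i2 => -1
  | i2, i2, i3, i3 => - h
  | i2, i3, i3, i2 => 1
  | i3, i1, i1, i3 => 1
  | i3, i1, i3, i3 => - h
  | i3, i2, i2, i3 => 1
  | i3, i3, i3, i3 => 1
  | _, _, _, _ => 0
  end.
Definition sigma12 (t : T3) : T3 :=
  fun c d e => sum3 (fun a => sum3 (fun b => scaleA (sigc a b c d) (t a b e))).

Definition gc (a b : ix) : R :=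
  match a, b with
  | i1, i1 => - (h / 2)
  | i1, i3 => -1
  | i2, i2 => 1
  | i3, i1 => 1
  | _, _ => 0
  end.
Definition gT2 (t : T2) : A := sum3 (fun a => sum3 (fun b => scaleA (gc a b) (t a b))).
Definition oneg (t : T3) : O1 :=
  fun a => sum3 (fun b => sum3 (fun c => scaleA (gc b c) (t a b c))).

Section Connection.
Variables c0 c1 : R.

Definition DXi (a : ix) : T2 :=
  addT2 (scaleT2 c0 (lmulT2 (Xgen a) (tens11 rho rho)))
        (scaleT2 c1 (addT2 (scaleT2 (sgn a) (tens11 (Xi a) rho))
                           (scaleT2 (-1) (tens11 rho (Xi a))))).

Definition DXiXi (a b : ix) : T3 :=
  addT3 (tens2Xi (DXi a) b) (scaleT3 (sgn a) (sigma12 (tens12 (Xi a) (DXi b)))).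

(* extension to all of Omega^1 (x)_A Omega^1 by
   D(f tau) = df (x) tau + (-1)^(hat f) f D tau *)
Definition D2 (t : T2) : T3 :=
  sumT3 (fun a b => addT3 (tens1XiXi (dA (t a b)) a b)
                          (lmulT3 (signA (t a b)) (DXiXi a b))).

Definition metric_compatible : Prop :=
  forall (t : T2) (a : ix), dA (gT2 t) a = oneg (D2 t) a.

End Connection.
End Superplane.

(* Main.v *)
Require Import Defs.
From mathcomp Require Import all_boot all_order all_algebra.
From mathcomp Require Import reals.
From mathcomp Require Import ring lra.
Require Import Defs.
Import GRing.Theory Num.Theory.
Local Open Scope ring_scope.

Arguments mulA : simpl never.
Arguments dA : simpl never.
Arguments signA : simpl never.
Arguments tens11 : simpl never.
Arguments rA : simpl never.
Arguments DXi : simpl never.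
Arguments DXiXi : simpl never.
Arguments rP : simpl never.
Arguments rT1 : simpl never.
Arguments rT2 : simpl never.
Arguments dP : simpl never.
Arguments linO : simpl never.

Section C.
Variable R : realType.
Lemma eqA (a b : A R) : A0 a = A0 b -> A1 a = A1 b -> A2 a = A2 b -> A12 a = A12 b -> a = b.
Proof. by case: a; case: b => /= ? ? ? ? ? ? ? ? -> -> -> ->. Qed.
Lemma A0_add (a b : A R) : A0 (addA a b) = A0 a + A0 b. Proof. by []. Qed.
Lemma A0_scale r (a : A R) : A0 (scaleA r a) = r *: A0 a. Proof. by []. Qed.
Lemma A0_zero : A0 (zeroA R) = 0. Proof. by []. Qed.
Lemma A1_add (a b : A R) : A1 (addA a b) = A1 a + A1 b. Proof. by []. Qed.
Lemma A1_scale r (a : A R) : A1 (scaleA r a) = r *: A1 a. Proof. by []. Qed.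
Lemma A1_zero : A1 (zeroA R) = 0. Proof. by []. Qed.
Lemma A2_add (a b : A R) : A2 (addA a b) = A2 a + A2 b. Proof. by []. Qed.
Lemma A2_scale r (a : A R) : A2 (scaleA r a) = r *: A2 a. Proof. by []. Qed.
Lemma A2_zero : A2 (zeroA R) = 0. Proof. by []. Qed.
Lemma A12_add (a b : A R) : A12 (addA a b) = A12 a + A12 b. Proof. by []. Qed.
Lemma A12_scale r (a : A R) : A12 (scaleA r a) = r *: A12 a. Proof. by []. Qed.
Lemma A12_zero : A12 (zeroA R) = 0. Proof. by []. Qed.
Definition compE := (A0_add, A1_add, A2_add, A12_add, A0_scale, A1_scale, A2_scale, A12_scale, A0_zero, A1_zero, A2_zero, A12_zero).
End C.
Arguments eqA {R}.
Ltac psimp := rewrite ?(derivD, derivN, derivB, derivZ, derivM, derivC, derivX, deriv0, derivnD, derivnN, derivnC, derivnZ);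
   rewrite -?mul_polyC.
Ltac genA := repeat match goal with
 | |- context [mulA ?h ?a ?b] => generalize (mulA h a b); intro
 | |- context [rT1 ?h ?w ?d] => generalize (rT1 h w d); intro
 | |- context [rT2 ?h ?w ?d] => generalize (rT2 h w d); intro
 | |- context [dP ?h ?w ?d] => generalize (dP h w d); intro
 | |- context [dA ?h ?w ?d] => generalize (dA h w d); intro
 | |- context [rA ?h ?w ?b ?d] => generalize (rA h w b d); intro
 | |- context [DXiXi ?h ?c0 ?c1 ?a ?b ?i ?j ?k] => generalize (DXiXi h c0 c1 a b i j k); intro
 | |- context [DXi ?h ?c0 ?c1 ?a ?i ?j] => generalize (DXi h c0 c1 a i j); intro
 end.
Ltac solC := genA; apply: eqA; rewrite /= ?compE -?mul_polyC ?polyCM ?polyCN; ring.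
Ltac solA := apply: eqA; rewrite /=; psimp; rewrite ?polyCM ?polyCN ?polyCD; ring.

Section S.
Variables (R : realType) (h : R).
Lemma mulA_addl (a a' b : A R) : mulA h (addA a a') b = addA (mulA h a b) (mulA h a' b).
Proof. case: a a' b => [? ? ? ?] [? ? ? ?] [? ? ? ?]; rewrite /mulA; solA. Qed.
Lemma mulA_scalel c (a b : A R) : mulA h (scaleA c a) b = scaleA c (mulA h a b).
Proof. case: a b => [? ? ? ?] [? ? ? ?]; rewrite /mulA; solA. Qed.
Lemma mulA0r (a : A R) : mulA h a (zeroA R) = zeroA R.
Proof. case: a => [? ? ? ?]; rewrite /mulA; solA. Qed.
Lemma mulA0l (a : A R) : mulA h (zeroA R) a = zeroA R.
Proof. case: a => [? ? ? ?]; rewrite /mulA; solA. Qed.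
Lemma mulA1l (a : A R) : mulA h (oneA R) a = a.
Proof. case: a => [? ? ? ?]; rewrite /mulA; solA. Qed.
Lemma signA0 : signA (zeroA R) = zeroA R.
Proof. rewrite /signA; solA. Qed.
Lemma signA1 : signA (oneA R) = oneA R.
Proof. rewrite /signA; solA. Qed.
Lemma polyA_add (p q : {poly R}) : polyA (p + q) = addA (polyA p) (polyA q).
Proof. solA. Qed.
Lemma polyA_scale c (p : {poly R}) : polyA (c *: p) = scaleA c (polyA p).
Proof. solA. Qed.

Lemma linO_add (w u v : O1 R) F d : (forall c, w c = addA (u c) (v c)) ->
  linO h w F d = addA (linO h u F d) (linO h v F d).
Proof. move=> E; rewrite /linO /sum3 !E !mulA_addl; solC. Qed.
Lemma linO_scale (w v : O1 R) r F d : (forall c, w c = scaleA r (v c)) ->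
  linO h w F d = scaleA r (linO h v F d).
Proof. move=> E; rewrite /linO /sum3 !E !mulA_scalel; solC. Qed.
Lemma linO_0 (w : O1 R) F d : (forall c, w c = zeroA R) -> linO h w F d = zeroA R.
Proof. move=> E; rewrite /linO /sum3 !E !mulA0l; solC. Qed.

Lemma dP_add p q c : dP h (p + q) c = addA (dP h p c) (dP h q c).
Proof. case: c; rewrite /dP; solA. Qed.
Lemma dP_scale r p c : dP h (r *: p) c = scaleA r (dP h p c).
Proof. case: c; rewrite /dP; solA. Qed.

Lemma rT1_add {w u v : O1 R} : (forall c, w c = addA (u c) (v c)) ->
  forall d, rT1 h w d = addA (rT1 h u d) (rT1 h v d).
Proof. by move=> E d; apply: linO_add. Qed.
Lemma rT2_add {w u v : O1 R} : (forall c, w c = addA (u c) (v c)) ->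
  forall d, rT2 h w d = addA (rT2 h u d) (rT2 h v d).
Proof. by move=> E d; apply: linO_add. Qed.
Lemma rT1_scale {w v : O1 R} {r} : (forall c, w c = scaleA r (v c)) ->
  forall d, rT1 h w d = scaleA r (rT1 h v d).
Proof. by move=> E d; apply: linO_scale. Qed.
Lemma rT2_scale {w v : O1 R} {r} : (forall c, w c = scaleA r (v c)) ->
  forall d, rT2 h w d = scaleA r (rT2 h v d).
Proof. by move=> E d; apply: linO_scale. Qed.

Lemma dA_add x y c : dA h (addA x y) c = addA (dA h x c) (dA h y c).
Proof.
rewrite /dA /addO /lmulO /=.
rewrite (rT1_add (dP_add (A1 x) (A1 y))) (rT2_add (dP_add (A2 x) (A2 y))).
rewrite (rT2_add (rT1_add (dP_add (A12 x) (A12 y)))).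
rewrite !dP_add !polyA_add !mulA_addl.
solC.
Qed.
Lemma dA_scale r x c : dA h (scaleA r x) c = scaleA r (dA h x c).
Proof.
rewrite /dA /addO /lmulO /=.
rewrite (rT1_scale (dP_scale r (A1 x))) (rT2_scale (dP_scale r (A2 x))).
rewrite (rT2_scale (rT1_scale (dP_scale r (A12 x)))).
rewrite !dP_scale !polyA_scale !mulA_scalel.
solC.
Qed.

Lemma addscale00 (x y : A R) : addA (scaleA 0 x) (scaleA 0 y) = zeroA R.
Proof. case: x y => [? ? ? ?] [? ? ? ?]; solA. Qed.
Lemma DXi0 a i j : DXi h 0 0 a i j = zeroA R.
Proof. by rewrite /DXi /addT2 /scaleT2 addscale00. Qed.
Lemma XiP0 c d : XiP h 0 c d = zeroA R.
Proof. case: c; case: d; solA. Qed.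
Lemma rP0 w d : rP h w 0 d = zeroA R.
Proof. rewrite /rP /linO /sum3 !XiP0 !mulA0r; solC. Qed.
Lemma rA0 w d : rA h w (zeroA R) d = zeroA R.
Proof.
rewrite /rA /addO A0_zero A1_zero A2_zero A12_zero rP0.
rewrite /rT1 /rT2 (linO_0 _ _ _ (rP0 w)) (linO_0 _ _ _ (rP0 w)).
rewrite (linO_0 _ _ _ (fun c => linO_0 _ _ c (rP0 w))).
solC.
Qed.
Lemma DXiXi0 a b i j k : DXiXi h 0 0 a b i j k = zeroA R.
Proof.
rewrite /DXiXi /addT3 /tens2Xi /scaleT3 /sigma12 /tens12 /sum3 !DXi0 !rA0.
case: ifP => _; solC.
Qed.
Lemma dA_zero c : dA h (zeroA R) c = zeroA R.
Proof. have -> : zeroA R = scaleA 0 (zeroA R) by solA. rewrite dA_scale; solC. Qed.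

Lemma converse : metric_compatible h 0 0.
Proof.
move=> t a.
rewrite /gT2 /sum3 !dA_add !dA_scale.
rewrite /oneg /D2 /sumT3 /sum3 /addT3 /lmulT3 /tens1XiXi /= !DXiXi0 !mulA0r.
solC.
Qed.
End S.
Arguments rT1_scale {R h w v r}.
Arguments rT2_scale {R h w v r}.
Arguments rT1_add {R h w u v}.
Arguments rT2_add {R h w u v}.

Section F.
Variables (R : realType) (h : R).

Lemma mulA1r (a : A R) : mulA h a (oneA R) = a.
Proof. case: a => [? ? ? ?]; rewrite /mulA; solA. Qed.
Lemma mulA_scaler c (a b : A R) : mulA h a (scaleA c b) = scaleA c (mulA h a b).
Proof. case: a b => [? ? ? ?] [? ? ? ?]; rewrite /mulA; solA. Qed.

Lemma XiPC a c d : XiP h a%:P c d = scaleA a (Xi R d c).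
Proof. case: c; case: d; solA. Qed.

Lemma rPC w a d : rP h w a%:P d = scaleA a (w d).
Proof.
rewrite /rP /linO /sum3 !XiPC !mulA_scaler.
case: d => /=; rewrite !mulA1r !mulA0r; solC.
Qed.

Lemma rA_const (w : O1 R) (y : A R) a b c e d :
  A0 y = a%:P -> A1 y = b%:P -> A2 y = c%:P -> A12 y = e%:P ->
  rA h w y d = addA (addA (scaleA a (w d)) (scaleA b (rT1 h w d)))
                    (addA (scaleA c (rT2 h w d)) (scaleA e (rT2 h (rT1 h w) d))).
Proof.
move=> E0 E1 E2 E3; rewrite /rA /addO E0 E1 E2 E3 rPC.
rewrite (rT1_scale (rPC w b)) (rT2_scale (rPC w c)) (rT2_scale (rT1_scale (rPC w e))).
solC.
Qed.

Lemma rP_X3 p c : rP h (Xi R i3) p c = XiP h p i3 c.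
Proof. rewrite /rP /linO /sum3 /Xi /= !mulA0l mulA1l; solC. Qed.

Definition X3T1 (q : {poly R}) (d : ix) : A R :=
  if d is i3 then mkA 0 q (- h *: q) 0 else zeroA R.
Definition X3T2 (q : {poly R}) (d : ix) : A R :=
  if d is i3 then mkA 0 0 q 0 else zeroA R.
Definition X3T12 (q : {poly R}) (d : ix) : A R :=
  if d is i3 then mkA 0 0 0 q else zeroA R.

Lemma rT1_X3 q d : rT1 h (rP h (Xi R i3) q) d = X3T1 q d.
Proof. rewrite /rT1 /linO /sum3 !rP_X3; case: d => /=; rewrite ?mulA0l /mulA; solA. Qed.
Lemma rT2_X3 q d : rT2 h (rP h (Xi R i3) q) d = X3T2 q d.
Proof. rewrite /rT2 /linO /sum3 !rP_X3; case: d => /=; rewrite ?mulA0l /mulA; solA. Qed.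
Lemma rT21_X3 q d : rT2 h (rT1 h (rP h (Xi R i3) q)) d = X3T12 q d.
Proof. rewrite /rT2 /linO /sum3 !rT1_X3; case: d => /=; rewrite ?mulA0l /mulA; solA. Qed.

Lemma rA_X3 (y : A R) d : rA h (Xi R i3) y d =
  if d is i3 then mkA (A0 y) (A1 y) (A2 y - h *: A1 y) (A12 y) else zeroA R.
Proof.
rewrite /rA /addO rP_X3 rT1_X3 rT2_X3 rT21_X3.
case: d => /=; solA.
Qed.
Lemma rA_X3_1 y : rA h (Xi R i3) y i1 = zeroA R. Proof. by rewrite rA_X3. Qed.
Lemma rA_X3_2 y : rA h (Xi R i3) y i2 = zeroA R. Proof. by rewrite rA_X3. Qed.
Lemma rA_X3_3 y : rA h (Xi R i3) y i3 = mkA (A0 y) (A1 y) (A2 y - h *: A1 y) (A12 y). Proof. by rewrite rA_X3. Qed.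
End F.

Section G.
Variables (R : realType) (h c0 c1 : R).
Lemma rT1rho1 : rT1 h (rho h) i1 =
  mkA 0 0 0 (1%:P).
Proof. rewrite /rT1 /linO /sum3 /=; rewrite /mulA; solA. Qed.
Lemma rT2rho1 : rT2 h (rho h) i1 =
  mkA 0 0 0 0.
Proof. rewrite /rT2 /linO /sum3 /=; rewrite /mulA; solA. Qed.
Lemma rT1X1_1 : rT1 h (Xi R i1) i1 =
  mkA 0 (1%:P) ((h)%:P) 0.
Proof. rewrite /rT1 /linO /sum3 /Xi /= !mulA0l mulA1l; solA. Qed.
Lemma rT2X1_1 : rT2 h (Xi R i1) i1 =
  mkA 0 0 (1%:P) 0.
Proof. rewrite /rT2 /linO /sum3 /Xi /= !mulA0l mulA1l; solA. Qed.
Lemma rT1rho2 : rT1 h (rho h) i2 =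
  mkA 0 ((- 1)%:P * 'X) ((h)%:P * 'X) 0.
Proof. rewrite /rT1 /linO /sum3 /=; rewrite /mulA; solA. Qed.
Lemma rT2rho2 : rT2 h (rho h) i2 =
  mkA 0 0 ((- 1)%:P * 'X) 0.
Proof. rewrite /rT2 /linO /sum3 /=; rewrite /mulA; solA. Qed.
Lemma rT1X1_2 : rT1 h (Xi R i1) i2 =
  mkA ((- (h))%:P * 'X) 0 0 0.
Proof. rewrite /rT1 /linO /sum3 /Xi /= !mulA0l mulA1l; solA. Qed.
Lemma rT2X1_2 : rT2 h (Xi R i1) i2 =
  mkA 0 0 0 0.
Proof. rewrite /rT2 /linO /sum3 /Xi /= !mulA0l mulA1l; solA. Qed.
Lemma RR11 : tens11 h (rho h) (rho h) i1 i1 =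
  mkA 0 0 0 0.
Proof. rewrite /tens11 (rA_const _ _ _ _ 0 (0) (-1) 0) ?rT1rho1 ?rT2rho1; first solC. all: rewrite /= ?polyC0 -?mul_polyC; ring. Qed.
Lemma RR21 : tens11 h (rho h) (rho h) i2 i1 =
  mkA 0 0 (1%:P * 'X) 0.
Proof. rewrite /tens11 (rA_const _ _ _ _ 0 (0) (-1) 0) ?rT1rho2 ?rT2rho2; first solC. all: rewrite /= ?polyC0 -?mul_polyC; ring. Qed.
Lemma RR13 : tens11 h (rho h) (rho h) i1 i3 =
  mkA 0 0 0 (1%:P).
Proof. rewrite /tens11 (rA_const _ _ _ _ 0 (1) (- (h/2)) 0) ?rT1rho1 ?rT2rho1; first solC. all: rewrite /= ?polyC0 -?mul_polyC; ring. Qed.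
Lemma RR23 : tens11 h (rho h) (rho h) i2 i3 =
  mkA 0 ((- 1)%:P * 'X) ((h)%:P * 'X + (h * 2^-1)%:P * 'X) 0.
Proof. rewrite /tens11 (rA_const _ _ _ _ 0 (1) (- (h/2)) 0) ?rT1rho2 ?rT2rho2; first solC. all: rewrite /= ?polyC0 -?mul_polyC; ring. Qed.
Lemma XR1_11 : tens11 h (Xi R i1) (rho h) i1 i1 =
  mkA 0 0 ((- 1)%:P) 0.
Proof. rewrite /tens11 (rA_const _ _ _ _ (0) (0) (-1) (0)) ?rT1X1_1 ?rT2X1_1; first solC. all: rewrite /= ?polyC0 -?mul_polyC; ring. Qed.
Lemma XR1_21 : tens11 h (Xi R i1) (rho h) i2 i1 =
  mkA 0 0 0 0.
Proof. rewrite /tens11 (rA_const _ _ _ _ (0) (0) (-1) (0)) ?rT1X1_2 ?rT2X1_2; first solC. all: rewrite /= ?polyC0 -?mul_polyC; ring. Qed.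
Lemma XR3_11 : tens11 h (Xi R i3) (rho h) i1 i1 =
  mkA 0 0 0 0.
Proof. rewrite /tens11 rA_X3 /=; solA. Qed.
Lemma XR3_21 : tens11 h (Xi R i3) (rho h) i2 i1 =
  mkA 0 0 0 0.
Proof. rewrite /tens11 rA_X3 /=; solA. Qed.
Lemma XR3_13 : tens11 h (Xi R i3) (rho h) i1 i3 =
  mkA 0 0 0 0.
Proof. rewrite /tens11 rA_X3 /=; solA. Qed.
Lemma XR3_23 : tens11 h (Xi R i3) (rho h) i2 i3 =
  mkA 0 0 0 0.
Proof. rewrite /tens11 rA_X3 /=; solA. Qed.
Lemma RX1_11 : tens11 h (rho h) (Xi R i1) i1 i1 =
  mkA 0 0 ((- 1)%:P) 0.
Proof. rewrite /tens11 (rA_const _ _ _ _ (1) (0) (0) (0)) /=; first (rewrite ?rT1rho1 ?rT2rho1; solC). all: by rewrite ?polyC0. Qed.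
Lemma RX1_21 : tens11 h (rho h) (Xi R i1) i2 i1 =
  mkA (1%:P * 'X) 0 0 0.
Proof. rewrite /tens11 (rA_const _ _ _ _ (1) (0) (0) (0)) /=; first (rewrite ?rT1rho2 ?rT2rho2; solC). all: by rewrite ?polyC0. Qed.
Lemma RX3_11 : tens11 h (rho h) (Xi R i3) i1 i1 =
  mkA 0 0 0 0.
Proof. by rewrite /tens11 /= rA0. Qed.
Lemma RX3_21 : tens11 h (rho h) (Xi R i3) i2 i1 =
  mkA 0 0 0 0.
Proof. by rewrite /tens11 /= rA0. Qed.
Lemma RX3_13 : tens11 h (rho h) (Xi R i3) i1 i3 =
  mkA 0 0 ((- 1)%:P) 0.
Proof. rewrite /tens11 (rA_const _ _ _ _ (1) (0) (0) (0)) /=; first (rewrite ?rT1rho1 ?rT2rho1; solC). all: by rewrite ?polyC0. Qed.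
Lemma RX3_23 : tens11 h (rho h) (Xi R i3) i2 i3 =
  mkA (1%:P * 'X) 0 0 0.
Proof. rewrite /tens11 (rA_const _ _ _ _ (1) (0) (0) (0)) /=; first (rewrite ?rT1rho2 ?rT2rho2; solC). all: by rewrite ?polyC0. Qed.
Lemma D1_11 : DXi h c0 c1 i1 i1 i1 =
  mkA 0 0 0 0.
Proof. rewrite /DXi /addT2 /scaleT2 /lmulT2 RR11 XR1_11 RX1_11 /=; rewrite /mulA; solA. Qed.
Lemma D1_21 : DXi h c0 c1 i1 i2 i1 =
  mkA ((- (c1))%:P * 'X) 0 0 ((c0)%:P * 'X).
Proof. rewrite /DXi /addT2 /scaleT2 /lmulT2 RR21 XR1_21 RX1_21 /=; rewrite /mulA; solA. Qed.
Lemma D3_11 : DXi h c0 c1 i3 i1 i1 =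
  mkA 0 0 0 0.
Proof. rewrite /DXi /addT2 /scaleT2 /lmulT2 RR11 XR3_11 RX3_11 /=; rewrite /mulA; solA. Qed.
Lemma D3_21 : DXi h c0 c1 i3 i2 i1 =
  mkA 0 0 0 0.
Proof. rewrite /DXi /addT2 /scaleT2 /lmulT2 RR21 XR3_21 RX3_21 /=; rewrite /mulA; solA. Qed.
Lemma D3_13 : DXi h c0 c1 i3 i1 i3 =
  mkA 0 0 ((c1)%:P) 0.
Proof. rewrite /DXi /addT2 /scaleT2 /lmulT2 RR13 XR3_13 RX3_13 /=; rewrite /mulA; solA. Qed.
Lemma D3_23 : DXi h c0 c1 i3 i2 i3 =
  mkA ((- (c1))%:P * 'X) 0 0 ((c0)%:P * 'X).
Proof. rewrite /DXi /addT2 /scaleT2 /lmulT2 RR23 XR3_23 RX3_23 /=; rewrite /mulA; solA. Qed.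
Lemma DD111 : DXiXi h c0 c1 i3 i1 i1 i1 i1 =
  mkA 0 0 0 0.
Proof. rewrite /DXiXi /addT3 /tens2Xi /scaleT3 /sigma12 /tens12 /sum3; cbv beta iota delta [ix_eqb sigc sgn]; rewrite !rA_X3_1 !rA_X3_2 !rA_X3_3 D3_11; solC. Qed.
Lemma DD113 : DXiXi h c0 c1 i3 i1 i1 i1 i3 =
  mkA 0 0 0 0.
Proof. rewrite /DXiXi /addT3 /tens2Xi /scaleT3 /sigma12 /tens12 /sum3; cbv beta iota delta [ix_eqb sigc sgn]; rewrite !rA_X3_1 !rA_X3_2 !rA_X3_3; solC. Qed.
Lemma DD122 : DXiXi h c0 c1 i3 i1 i1 i2 i2 =
  mkA 0 0 0 0.
Proof. rewrite /DXiXi /addT3 /tens2Xi /scaleT3 /sigma12 /tens12 /sum3; cbv beta iota delta [ix_eqb sigc sgn]; rewrite !rA_X3_1 !rA_X3_2 !rA_X3_3; solC. Qed.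
Lemma DD131 : DXiXi h c0 c1 i3 i1 i1 i3 i1 =
  mkA 0 0 ((c1)%:P) 0.
Proof. rewrite /DXiXi /addT3 /tens2Xi /scaleT3 /sigma12 /tens12 /sum3; cbv beta iota delta [ix_eqb sigc sgn]; rewrite !rA_X3_1 !rA_X3_2 !rA_X3_3 D3_13 D1_11; solC. Qed.
Lemma DD211 : DXiXi h c0 c1 i3 i1 i2 i1 i1 =
  mkA 0 0 0 0.
Proof. rewrite /DXiXi /addT3 /tens2Xi /scaleT3 /sigma12 /tens12 /sum3; cbv beta iota delta [ix_eqb sigc sgn]; rewrite !rA_X3_1 !rA_X3_2 !rA_X3_3 D3_21; solC. Qed.
Lemma DD213 : DXiXi h c0 c1 i3 i1 i2 i1 i3 =
  mkA 0 0 0 0.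
Proof. rewrite /DXiXi /addT3 /tens2Xi /scaleT3 /sigma12 /tens12 /sum3; cbv beta iota delta [ix_eqb sigc sgn]; rewrite !rA_X3_1 !rA_X3_2 !rA_X3_3; solC. Qed.
Lemma DD222 : DXiXi h c0 c1 i3 i1 i2 i2 i2 =
  mkA 0 0 0 0.
Proof. rewrite /DXiXi /addT3 /tens2Xi /scaleT3 /sigma12 /tens12 /sum3; cbv beta iota delta [ix_eqb sigc sgn]; rewrite !rA_X3_1 !rA_X3_2 !rA_X3_3; solC. Qed.
Lemma DD231 : DXiXi h c0 c1 i3 i1 i2 i3 i1 =
  mkA ((- (2%:R * c1))%:P * 'X) 0 0 ((2%:R * c0)%:P * 'X).
Proof. rewrite /DXiXi /addT3 /tens2Xi /scaleT3 /sigma12 /tens12 /sum3; cbv beta iota delta [ix_eqb sigc sgn]; rewrite !rA_X3_1 !rA_X3_2 !rA_X3_3 D3_23 D1_21; solC. Qed.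
End G.

Section H.
Variables (R : realType) (h c0 c1 : R).

Lemma polyA0 : polyA (0 : {poly R}) = zeroA R. Proof. by []. Qed.
Lemma dPC a c : dP h a%:P c = zeroA R.
Proof. case: c; rewrite /dP; solA. Qed.
Lemma dP0 c : dP h 0 c = zeroA R.
Proof. by rewrite -polyC0 dPC. Qed.
Lemma dA_one c : dA h (oneA R) c = zeroA R.
Proof.
have E0 : A0 (oneA R) = 1%:P by [].
have E1 : A1 (oneA R) = 0 by [].
have E2 : A2 (oneA R) = 0 by [].
have E3 : A12 (oneA R) = 0 by [].
rewrite /dA /addO /lmulO E0 E1 E2 E3 dPC ?dP0 !polyA0 !mulA0l.
rewrite /rT1 /rT2 (linO_0 _ _ _ _ _ dP0) (linO_0 _ _ _ _ _ dP0).
rewrite (linO_0 _ _ _ _ _ (fun c => linO_0 _ _ _ _ c dP0)).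
solC.
Qed.

Definition tE : T2 R := fun a b => if ix_eqb a i3 && ix_eqb b i1 then oneA R else zeroA R.

Lemma LHS0 a : dA h (gT2 h tE) a = zeroA R.
Proof.
rewrite /gT2 /sum3 !dA_add !dA_scale /tE.
cbv beta iota delta [ix_eqb andb].
rewrite !dA_one !(dA_zero R h); solC.
Qed.

Lemma D2E i j k : D2 h c0 c1 tE i j k = DXiXi h c0 c1 i3 i1 i j k.
Proof.
rewrite /D2 /sumT3 /sum3 /addT3 /lmulT3 /tens1XiXi /tE.
cbv beta iota delta [ix_eqb andb].
rewrite !dA_one !(dA_zero R h) !if_same !signA0 !signA1 !(mulA0l R h) !(mulA1l R h).
solC.
Qed.

Lemma forward : metric_compatible h c0 c1 -> c0 = 0 /\ c1 = 0.
Proof.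
move=> H.
have H1 := H tE i1.
have H2 := H tE i2.
move: H1 H2.
rewrite !LHS0 /oneg /sum3.
cbv beta iota delta [gc].
rewrite !D2E DD111 DD113 DD122 DD131 DD211 DD213 DD222 DD231.
move=> /(congr1 (@A2 R)) H1 /(congr1 (@A12 R)) H2.
move: H1 H2; genA; rewrite /= => H1 H2.
have E1 : (c1%:P : {poly R}) = 0.
  match type of H1 with ?L = ?M => have E : (c1%:P : {poly R}) = M - L by rewrite -?mul_polyC ?polyCM ?polyCN; ring end.
  by rewrite E -H1 subrr.
have E2 : ((2%:R * c0)%:P * 'X : {poly R}) = 0.
  match type of H2 with ?L = ?M => have E : ((2%:R * c0)%:P * 'X : {poly R}) = M - L by rewrite -?mul_polyC ?polyCM ?polyCN; ring end.
  by rewrite E -H2 subrr.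
move: E1 E2 => /eqP; rewrite polyC_eq0 => /eqP -> /eqP; rewrite mulf_eq0 polyX_eq0 orbF polyC_eq0 => /eqP E.
split=> //; lra.
Qed.
End H.

Theorem mainTheorem4 (R : realType) (h c0 c1 : R) :
  metric_compatible h c0 c1 <-> (c0 = 0 /\ c1 = 0)%R.
Proof.
split; first exact: forward.
by case=> -> ->; exact: converse.
Qed.
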